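(* Let $S$ be a finite semigroup. The following are equivalent: (i) $\mathbb{N}\times S$ has only countably many subdirect products; (ii) $\mathbb{N}\times S$ has only countably many pairwise non-isomorphic subdirect products; (iii) for every $s\in S$ there exists $t\in S$ such that $ts=s$ or $st=s$.
   Context: $\mathbb{N}=\{1,2,3,\dots\}$ is the free monogenic semigroup (positive integers under addition); $\mathbb{N}\times S$ is the direct product with componentwise operation. A subdirect product of $\mathbb{N}\times S$ is a subsemigroup $U\leq \mathbb{N}\times S$ whose projection onto the first coordinate is all of $\mathbb{N}$ and whose projection onto the second coordinate is all of $S$. *)

(* Defs.v *)
From mathcomp Require Import all_boot.
From mathcomp Require Import boolp classical_sets cardinality.
Set Implicit Arguments. Unset Strict Implicit. Unset Printing Implicit Defensive.
Local Open Scope classical_set_scope.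

(* The free monogenic semigroup N = {1,2,3,...} under addition is modelled
   by the positive elements of nat; N x S is modelled inside nat * S, with
   componentwise operation. *)

Definition prodop (S : Type) (op : S -> S -> S) (x y : nat * S) : nat * S :=
  (x.1 + y.1, op x.2 y.2).

Definition subdirect (S : Type) (op : S -> S -> S) (U : set (nat * S)) : Prop :=
  [/\ (forall x, U x -> 0 < x.1),
      (forall x y, U x -> U y -> U (prodop op x y)),
      (forall n, 0 < n -> exists s, U (n, s)) &
      (forall s, exists n, U (n, s))].

Definition semigroup_iso (S : Type) (op : S -> S -> S) (U V : set (nat * S)) : Prop :=
  exists f : nat * S -> nat * S,
    [/\ (forall x, U x -> V (f x)),
        (forall x y, U x -> U y -> f x = f y -> x = y),
        (forall y, V y -> exists2 x, U x & f x = y) &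
        (forall x y, U x -> U y -> f (prodop op x y) = prodop op (f x) (f y))].

(* Main.v *)
Require Import Defs.
From mathcomp Require Import all_boot.
From mathcomp Require Import boolp classical_sets cardinality.
From mathcomp Require Import zify.
Set Implicit Arguments. Unset Strict Implicit.
Local Open Scope classical_set_scope.

Definition spow (S : Type) (op : S -> S -> S) (x : S) (n : nat) : S :=
  iter n.-1 (op x) x.

Lemma spow1 (S : Type) (op : S -> S -> S) x : spow op x 1 = x.
Proof. by []. Qed.

Lemma spowS (S : Type) (op : S -> S -> S) x n :
  spow op x n.+2 = op x (spow op x n.+1).
Proof. by []. Qed.

Lemma spowD (S : Type) (op : S -> S -> S) (A : associative op) x a b :
  0 < a -> 0 < b -> op (spow op x a) (spow op x b) = spow op x (a + b).
Proof.
case: a => // a _; case: b => // b _.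
elim: a => [|a IH]; first by rewrite add1n spowS.
by rewrite spowS -A IH !addSn spowS.
Qed.

Lemma spow_idem (S : Type) (op : S -> S -> S) e c :
  op e e = e -> 0 < c -> spow op e c = e.
Proof.
move=> He; case: c => // c _; elim: c => // c IH.
by rewrite spowS IH He.
Qed.

Lemma idem_pow (S : finType) (op : S -> S -> S) (A : associative op) (x : S) :
  exists M, 1 < M /\ op (spow op x M) (spow op x M) = spow op x M.
Proof.
pose f := fun i : 'I_(#|S|.+1) => spow op x i.+1.
have : ~~ injectiveb f.
  apply/negP => /injectiveP inj; have := leq_card f inj.
  by rewrite card_ord ltnn.
move=> /injectivePn [i [j neq Hij]].
have {neq Hij} [a [p [a0 [p0 Hap]]]] : exists a p, 0 < a /\ 0 < p /\
    spow op x (a + p) = spow op x a.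
  rewrite /f in Hij.
  have : (i : nat) != j by [].
  rewrite neq_ltn => /orP [lt|lt].
    exists i.+1, (j - i); do 2!(split; first lia).
    by rewrite Hij; congr spow; lia.
  exists j.+1, (i - j); do 2!(split; first lia).
  by rewrite -Hij; congr spow; lia.
have per : forall m, a <= m -> spow op x (m + p) = spow op x m.
  move=> m am; have [->|lt] := eqVneq m a; first by [].
  have -> : m + p = (m - a) + (a + p) by lia.
  rewrite -(spowD A) ?Hap ?(spowD A) //; try lia.
  by congr spow; lia.
have perc : forall c m, a <= m -> spow op x (m + c * p) = spow op x m.
  elim=> [|c IH] m am; first by rewrite mul0n addn0.
  have -> : m + c.+1 * p = (m + c * p) + p by rewrite mulSn; lia.
  rewrite per; last by lia.
  by rewrite IH.
have Hk : op (spow op x (a * p)) (spow op x (a * p)) = spow op x (a * p).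
  rewrite (spowD A); try nia.
  by rewrite perc //; nia.
pose M := a * p + a * p. exists M; split; rewrite /M; first nia.
by rewrite -(spowD A) ?Hk //; nia.
Qed.

Definition ppow (S : Type) (op : S -> S -> S) (v : nat * S) (b : nat) :=
  spow (prodop op) v b.

Lemma ppowE (S : Type) (op : S -> S -> S) v b : 0 < b ->
  ppow op v b = (b * v.1, spow op v.2 b).
Proof.
case: b => // b _; elim: b => [|b IH]; first by rewrite mul1n; case: v.
rewrite /ppow spowS -/(ppow op v b.+1) IH /prodop /=.
by rewrite mulSn.
Qed.

Lemma ppow_in (S : Type) (op : S -> S -> S) (U : set (nat * S)) v b :
  (forall x y, U x -> U y -> U (prodop op x y)) -> U v -> U (ppow op v b).
Proof.
move=> cl Uv; case: b => [|b] //; elim: b => [|b IH] //.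
by rewrite /ppow spowS; apply: cl.
Qed.

Lemma ppow_hom (S : Type) (op : S -> S -> S) (U : set (nat * S)) f v b :
  (forall x y, U x -> U y -> U (prodop op x y)) ->
  (forall x y, U x -> U y -> f (prodop op x y) = prodop op (f x) (f y)) ->
  U v -> f (ppow op v b) = ppow op (f v) b.
Proof.
move=> cl hom Uv; case: b => [|b] //; elim: b => [|b IH] //.
rewrite /ppow !spowS hom //; last exact: (ppow_in _ cl).
by rewrite -/(ppow op v b.+1) IH.
Qed.

Definition indec (S : Type) (op : S -> S -> S) (U : set (nat * S)) u :=
  ~ exists p q, [/\ U p, U q & u = prodop op p q].

Definition Pw (S : Type) (op : S -> S -> S) (U : set (nat * S)) M u b :=
  0 < b /\ exists v, U v /\ ppow op v b = ppow op u M.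

Definition Inv (S : Type) (op : S -> S -> S) (U : set (nat * S)) M :=
  [set b | exists u, [/\ U u, indec op U u, Pw op U M u b &
                         forall b', Pw op U M u b' -> b' <= b]].

Lemma Inv_iso (S : Type) (op : S -> S -> S) (U V : set (nat * S)) M :
  (forall x y, U x -> U y -> U (prodop op x y)) ->
  (forall x y, V x -> V y -> V (prodop op x y)) ->
  semigroup_iso op U V -> Inv op U M = Inv op V M.
Proof.
move=> clU clV [f [fUV finj fsurj fhom]].
rewrite predeqE => b; split.
- move=> [u [Uu ind [b0 [v [Uv Hv]]] mx]].
  exists (f u); split.
  + exact: fUV.
  + move=> [p [q [Vp Vq E]]].
    have [p' Up' Ep] := fsurj _ Vp; have [q' Uq' Eq] := fsurj _ Vq.
    apply: ind; exists p', q'; split => //; apply: finj => //; first exact: clU.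
    by rewrite fhom // Eq Ep.
  + split => //; exists (f v); split; first exact: fUV.
    by rewrite -!(ppow_hom _ clU fhom) // Hv.
  + move=> b' [b'0 [w [Vw Hw]]].
    have [w' Uw' Ew] := fsurj _ Vw.
    apply: mx; split => //; exists w'; split => //.
    apply: finj; try exact: ppow_in.
    by rewrite !(ppow_hom _ clU fhom) // Ew.
- move=> [u [Vu ind [b0 [v [Vv Hv]]] mx]].
  have [u' Uu' Eu] := fsurj _ Vu.
  exists u'; split => //.
  + move=> [p [q [Up Uq E]]].
    apply: ind; exists (f p), (f q); split; try exact: fUV.
    by rewrite -fhom // -E.
  + split => //.
    have [v' Uv' Ev] := fsurj _ Vv.
    exists v'; split => //; apply: finj; try exact: ppow_in.
    by rewrite !(ppow_hom _ clU fhom) // Ev Eu.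
  + move=> b' [b'0 [w [Uw Hw]]].
    apply: mx; split => //; exists (f w); split; first exact: fUV.
    by rewrite -Eu -!(ppow_hom _ clU fhom) // Hw.
Qed.

Definition Above (S : Type) (op : S -> S -> S) (s x : S) : Prop :=
  [\/ s = x, (exists u, s = op u x), (exists v, s = op x v) |
      (exists u v, s = op u (op x v))].

Lemma Above_l (S : Type) (op : S -> S -> S) (A : associative op) s x y :
  Above op s (op x y) -> Above op s x.
Proof.
case=> [->|[u ->]|[v ->]|[u [v ->]]].
- by apply: Or43; exists y.
- by apply: Or44; exists u, y.
- by apply: Or43; exists (op y v); rewrite !A.
- by apply: Or44; exists u, (op y v); rewrite !A.
Qed.

Lemma Above_r (S : Type) (op : S -> S -> S) (A : associative op) s x y :
  Above op s (op x y) -> Above op s y.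
Proof.
case=> [->|[u ->]|[v ->]|[u [v ->]]].
- by apply: Or42; exists x.
- by apply: Or42; exists (op u x); rewrite !A.
- by apply: Or44; exists x, v; rewrite !A.
- by apply: Or44; exists (op u x), v; rewrite !A.
Qed.

Lemma spow_comm (S : Type) (op : S -> S -> S) (A : associative op) x n :
  0 < n -> op (spow op x n) x = op x (spow op x n).
Proof.
move=> n0; rewrite -[in LHS](spow1 op x) -[in RHS](spow1 op x).
by rewrite !(spowD A) // addnC.
Qed.

Lemma no_sas (S : finType) (op : S -> S -> S) (A : associative op) (s : S) :
  (forall t, op t s <> s /\ op s t <> s) ->
  forall a c, s <> op a (op s c).
Proof.
move=> H a c E.
have Hn : forall n, 0 < n -> s = op (spow op a n) (op s (spow op c n)).
  case=> // n _; elim: n => [|n IH] //.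
  transitivity (op a (op (op (spow op a n.+1) (op s (spow op c n.+1))) c)).
    by rewrite -IH.
  rewrite !spowS -(spow_comm A) //.
  by rewrite -(spow_comm A c) // (spow_comm A a) // !A.
have [M [M1 HM]] := idem_pow A a.
have EM := Hn M (ltnW M1).
apply: (proj1 (H (spow op a M))).
by rewrite {1}EM A HM -EM.
Qed.

Lemma notAbove_sy (S : finType) (op : S -> S -> S) (A : associative op) (s : S) :
  (forall t, op t s <> s /\ op s t <> s) -> forall y, ~ Above op s (op s y).
Proof.
move=> H y [E|[u E]|[v E]|[u [v E]]].
- exact: (proj2 (H y)) (esym E).
- exact: (no_sas A H E).
- by apply: (proj2 (H (op y v))); rewrite A -E.
- by apply: (no_sas A H (a:=u) (c:=op y v)); rewrite {1}E -A.
Qed.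

Lemma notAbove_ys (S : finType) (op : S -> S -> S) (A : associative op) (s : S) :
  (forall t, op t s <> s /\ op s t <> s) -> forall y, ~ Above op s (op y s).
Proof.
move=> H y [E|[u E]|[v E]|[u [v E]]].
- exact: (proj1 (H y)) (esym E).
- by apply: (proj1 (H (op u y))); rewrite -A -E.
- by apply: (no_sas A H (a:=y) (c:=v)); rewrite {1}E A.
- by apply: (no_sas A H (a:=op u y) (c:=v)); rewrite {1}E !A.
Qed.

Inductive gen (S : Type) (op : S -> S -> S) (s : S) (X : set nat) : nat * S -> Prop :=
| gen1 x : ~ Above op s x -> gen op s X (1, x)
| gen2 x : Above op s x -> gen op s X (2, x)
| gen3 k : X k -> gen op s X (k.*2.+3, s)
| genM u v : gen op s X u -> gen op s X v -> gen op s X (prodop op u v).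

Lemma gen_pos (S : Type) (op : S -> S -> S) s X u : gen op s X u -> 0 < u.1.
Proof. by elim=> //= u1 v1 _ Hu _ Hv; rewrite addn_gt0 Hu. Qed.

Lemma gen_subdirect (S : finType) (op : S -> S -> S) (A : associative op) (s : S) X :
  (forall t, op t s <> s /\ op s t <> s) -> subdirect op (gen op s X).
Proof.
move=> H; split.
- exact: gen_pos.
- by move=> x y; apply: genM.
- case=> // n _.
  have nz : ~ Above op s (op s s) by apply: notAbove_sy.
  exists (spow op (op s s) n.+1); elim: n => [|n IH]; first exact: gen1.
  have := genM (gen1 X nz) IH.
  by rewrite /prodop /= add1n.
- move=> x; have [ab|nab] := pselect (Above op s x).
  + by exists 2; apply: gen2.
  + by exists 1; apply: gen1.
Qed.

Lemma gen_even (S : finType) (op : S -> S -> S) (A : associative op) (s : S) X :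
  (forall t, op t s <> s /\ op s t <> s) ->
  forall u, gen op s X u -> Above op s u.2 -> u.2 <> s -> ~~ odd u.1.
Proof.
move=> H u Hu; elim: u / Hu => //=.
- move=> u v _ IHu _ IHv ab _.
  have abu := Above_l A ab; have abv := Above_r A ab.
  have us : u.2 <> s by move=> E; apply: (notAbove_sy A H (y:=v.2)); rewrite -{2}E.
  have vs : v.2 <> s by move=> E; apply: (notAbove_ys A H (y:=u.2)); rewrite -{2}E.
  by rewrite oddD (negPf (IHu abu us)) (negPf (IHv abv vs)).
Qed.

Lemma Pw_bound (S : Type) (op : S -> S -> S) U M u b :
  (forall x, U x -> 0 < x.1) -> 0 < M -> Pw op U M u b -> b <= M * u.1.
Proof.
move=> pos M0 [b0 [v [Uv E]]].
rewrite !ppowE // in E; case: E => E1 _.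
have := pos _ Uv; rewrite -E1; nia.
Qed.

Lemma Inv_gen (S : finType) (op : S -> S -> S) (A : associative op) (s : S) X M :
  (forall t, op t s <> s /\ op s t <> s) ->
  1 < M -> op (spow op s M) (spow op s M) = spow op s M ->
  forall k, Inv op (gen op s X) M (M * k.*2.+3) <-> X k.
Proof.
move=> H M1 HM.
have M0 : 0 < M by apply: ltnW.
have PwM : forall k, Pw op (gen op s X) M (k.*2.+3, s) (M * k.*2.+3).
  move=> k; split; first by rewrite muln_gt0 M0.
  exists (1, spow op s M); split.
    apply: gen1; case: M M1 HM {M0} => // [[|m]] // _ _.
    by rewrite spowS; apply: notAbove_sy.
  rewrite !ppowE //= ?muln_gt0 ?M0 // muln1 spow_idem //.
  by rewrite muln_gt0 M0.
move=> k; split.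
- move=> [u [Uu ind Pb mx]].
  have bnd := Pw_bound (@gen_pos _ op s X) M0 Pb.
  case: Uu ind Pb mx bnd => [x _|x _|k' Xk|p q Up Uq] ind Pb mx bnd /=.
  + move: bnd => /=; nia.
  + move: bnd => /=; nia.
  + have := mx _ (PwM k'); move: bnd => /= b1 b2.
    have -> : k = k' by nia.
    exact: Xk.
  + by exfalso; apply: ind; exists p, q; split.
- move=> Xk; exists (k.*2.+3, s); split.
  + exact: gen3.
  + move=> [p [q [Up Uq E]]].
    have Es : op p.2 q.2 = s by rewrite /prodop in E; case: E.
    have E1 : p.1 + q.1 = k.*2.+3 by rewrite /prodop in E; case: E.
    have ab : Above op s (op p.2 q.2) by rewrite Es; apply: Or41.
    have ps : p.2 <> s.
      by move=> E'; apply: (notAbove_sy A H (y:=q.2)); rewrite -{2}E' Es; apply: Or41.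
    have qs : q.2 <> s.
      by move=> E'; apply: (notAbove_ys A H (y:=p.2)); rewrite -{2}E' Es; apply: Or41.
    have := gen_even A H Up (Above_l A ab) ps.
    have := gen_even A H Uq (Above_r A ab) qs.
    move: E1 => /(congr1 odd); rewrite oddD /= odd_double.
    by case: (odd p.1); case: (odd q.1).
  + exact: PwM.
  + move=> b' Pb'; have := Pw_bound (@gen_pos _ op s X) M0 Pb'; by [].
Qed.

Lemma cantor_nat : ~ countable [set: set nat].
Proof.
move=> /countable_injP [f finj].
pose D := [set n | ~ exists X, f X = n /\ X n].
have [Dn|nDn] := pselect (D (f D)).
- exact: (Dn (ex_intro _ D (conj erefl Dn))).
- apply: (nDn); move=> [X [EX XD]].
  have XeD : X = D by apply: finj; rewrite ?in_setE.
  by move: XD; rewrite XeD; exact: nDn.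
Qed.

Lemma P2_P3 (S : finType) (op : S -> S -> S) (A : associative op) :
  (exists C : set (set (nat * S)),
         [/\ countable C,
             (forall V, C V -> subdirect op V) &
             (forall U, subdirect op U -> exists2 V, C V & semigroup_iso op U V)]) ->
  forall s : S, exists t : S, op t s = s \/ op s t = s.
Proof.
move=> [C [cC CV Cov]] s.
have [//|nH] := pselect (exists t, op t s = s \/ op s t = s).
have H : forall t, op t s <> s /\ op s t <> s.
  by move=> t; split => E; apply: nH; exists t; [left|right].
have ex : forall X : set nat, exists V, C V /\ semigroup_iso op (gen op s X) V.
  move=> X; have [V CVV iso] := Cov _ (@gen_subdirect _ _ A s X H).
  by exists V.
have [g Hg] := choice ex.
have [M [M1 HM]] := idem_pow A s.
have ginj : forall X Y, g X = g Y -> X = Y.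
  move=> X Y E.
  have IX : Inv op (gen op s X) M = Inv op (g X) M.
    apply: Inv_iso; [by move=> ? ?; apply: genM| |exact: (proj2 (Hg X))].
    by case: (CV _ (proj1 (Hg X))).
  have IY : Inv op (gen op s Y) M = Inv op (g Y) M.
    apply: Inv_iso; [by move=> ? ?; apply: genM| |exact: (proj2 (Hg Y))].
    by case: (CV _ (proj1 (Hg Y))).
  rewrite predeqE => k.
  rewrite -(@Inv_gen _ _ A s X M H M1 HM k) -(@Inv_gen _ _ A s Y M H M1 HM k).
  by rewrite IX IY E.
suff : countable [set: set nat] by move=> /cantor_nat.
move: cC => /countable_injP [h hinj].
apply/countable_injP; exists (h \o g) => X Y _ _ /= E.
apply: ginj; apply: hinj => //; rewrite in_setE; exact: (proj1 (Hg _)).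
Qed.

Definition decA (c : nat * seq (option nat)) (n : nat) : bool :=
  if nth None c.2 (n %% c.1) is Some a then a <= n else false.

Definition minr (A : nat -> Prop) (m r : nat) : option nat :=
  match pselect (exists n, (n %% m == r) && `[< A n >]) with
  | left h => Some (ex_minn h)
  | right _ => None
  end.

Lemma per_code (A : nat -> Prop) m : 0 < m -> (forall n, A n -> A (n + m)) ->
  forall n, A n <-> decA (m, mkseq (minr A m) m) n.
Proof.
move=> m0 Hm n; rewrite /decA /= nth_mkseq ?ltn_pmod //.
rewrite /minr; case: pselect => [h|nh].
- case: ex_minnP => a /andP [/eqP ar /asboolP Aa] amin; split.
  + by move=> An; apply: amin; rewrite eqxx /=; apply: asboolT.
  + move=> an.
    have : m %| n - a by rewrite -eqn_mod_dvd // ar.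
    move=> /divnK En.
    have -> : n = a + (n - a) %/ m * m by rewrite En; lia.
    elim: ((n - a) %/ m) => [|c IH]; first by rewrite addn0.
    by rewrite mulSn addnCA addnC; apply: Hm.
- split => // An; exfalso; apply: nh; exists n; rewrite eqxx /=; exact: asboolT.
Qed.

Definition decU (S : finType) (c : {ffun S -> nat * seq (option nat)}) : set (nat * S) :=
  [set u | decA (c u.2) u.1].

Lemma P3_P1 (S : finType) (op : S -> S -> S) :
  (forall s : S, exists t : S, op t s = s \/ op s t = s) ->
  countable [set U : set (nat * S) | subdirect op U].
Proof.
move=> H3.
have sub : [set U : set (nat * S) | subdirect op U] `<=` range (@decU S).
  move=> U [pos cl surj1 surj2].
  have ex : forall s, exists c, forall n, U (n, s) <-> decA c n.
    move=> s; have [t Ht] := H3 s; have [m Um] := surj2 t.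
    have m0 : 0 < m := pos _ Um.
    exists (m, mkseq (minr (fun n => U (n, s)) m) m).
    apply: per_code => // n Un.
    case: Ht => E.
    - by have := cl _ _ Um Un; rewrite /prodop /= E addnC.
    - by have := cl _ _ Un Um; rewrite /prodop /= E.
  have [f Hf] := choice ex.
  exists [ffun s => f s] => //.
  rewrite predeqE => -[n x]; rewrite /decU /= ffunE.
  by split => /Hf.
apply: (sub_countable (subset_card_le sub)).
apply: (sub_countable (card_image_le _ _)).
exact: countableP.
Qed.

Unset Implicit Arguments. Set Strict Implicit.

Theorem theoremE (S : finType) (op : S -> S -> S) (op_assoc : associative op) :
  [<-> countable [set U : set (nat * S) | subdirect op U];
       exists C : set (set (nat * S)),
         [/\ countable C,
             (forall V, C V -> subdirect op V) &
             (forall U, subdirect op U -> exists2 V, C V & semigroup_iso op U V)];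
       forall s : S, exists t : S, op t s = s \/ op s t = s].
Proof.
tfae.
- move=> cS; exists [set U : set (nat * S) | subdirect op U]; split => //.
  move=> U sU; exists U => //; exists id; split => //.
  by move=> y Uy; exists y.
- exact: P2_P3.
- exact: P3_P1.
Qed.
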